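(* Let $\lambda>0$ and $\overline{S}_{\lambda}=\{z\in\mathbb{S}: d_{\mathbb{S}}(z,0)\leqslant\lambda\}$. Then $$\max\{|z|: z\in\overline{S}_{\lambda}\}=\frac{2}{\pi}\lambda.$$
   Context: $\mathbb{S}=\{z\in\mathbb{C}:-1<\operatorname{Re} z<1\}$. The hyperbolic density of $\mathbb{S}$ is $\rho_{\mathbb{S}}(z)=\frac{\pi}{2}\big/\cos\left(\frac{\pi}{2}\operatorname{Re} z\right)$ and $d_{\mathbb{S}}(z_1,z_2)=\inf_\gamma\int_\gamma\rho_{\mathbb{S}}(z)|dz|$ over $C^1$ curves $\gamma$ in $\mathbb{S}$ joining $z_1$ to $z_2$. *)

(* Defs.v *)
From Stdlib Require Import Reals.
From Coquelicot Require Import Coquelicot.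
Open Scope R_scope.

Definition in_strip (z : C) : Prop := -1 < Re z < 1.

Definition rho_S (z : C) : R := (PI / 2) / cos (PI / 2 * Re z).

(* A C^1 curve parametrized on [0,1] (given as a C^1 map R -> C, i.e. both
   coordinate functions are differentiable everywhere with continuous
   derivative; every C^1 curve on [0,1] extends to such a map). *)
Definition C1_curve (g : R -> C) : Prop :=
  (forall t, ex_derive (fun s => Re (g s)) t /\ ex_derive (fun s => Im (g s)) t) /\
  (forall t, continuous (Derive (fun s => Re (g s))) t /\
             continuous (Derive (fun s => Im (g s))) t).

Definition hlength (g : R -> C) : R :=
  RInt (fun t => rho_S (g t) *
                 sqrt ((Derive (fun s => Re (g s)) t) ^ 2 +
                       (Derive (fun s => Im (g s)) t) ^ 2)) 0 1.

Definition curve_in_S (g : R -> C) (z1 z2 : C) : Prop :=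
  C1_curve g /\ g 0 = z1 /\ g 1 = z2 /\ (forall t, 0 <= t <= 1 -> in_strip (g t)).

Definition d_S (z1 z2 : C) : Rbar :=
  Glb_Rbar (fun L => exists g, curve_in_S g z1 z2 /\ L = hlength g).

Definition closed_disc_S (lam : R) (z : C) : Prop :=
  in_strip z /\ Rbar_le (d_S z 0) (Finite lam).

(* Main.v *)
Require Import Defs.
From Stdlib Require Import ssreflect.
From Stdlib Require Import Reals Lra FunctionalExtensionality.
From Coquelicot Require Import Coquelicot.
Open Scope R_scope.

Lemma cp_of_cont (f : R -> R) x : continuous f x -> continuity_pt f x.
Proof. intro H. apply continuity_pt_filterlim. exact H. Qed.

Lemma cont_of_cp (f : R -> R) x : continuity_pt f x -> continuous f x.
Proof. intro H. apply continuity_pt_filterlim. exact H. Qed.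

Lemma cos_strip x : -1 < x < 1 -> 0 < cos (PI / 2 * x) <= 1.
Proof.
  intro H. split.
  - apply cos_gt_0; pose proof PI_RGT_0; nra.
  - apply COS_bound.
Qed.

Lemma integrand_cont g t : C1_curve g -> in_strip (g t) ->
  continuous (fun t => rho_S (g t) *
                 sqrt ((Derive (fun s => Re (g s)) t) ^ 2 +
                       (Derive (fun s => Im (g s)) t) ^ 2)) t.
Proof.
  intros [Hd Hc] Hs.
  apply cont_of_cp.
  assert (hX : continuity_pt (fun s => Re (g s)) t).
  { apply cp_of_cont. apply: ex_derive_continuous. apply (proj1 (Hd t)). }
  assert (hDX : continuity_pt (Derive (fun s => Re (g s))) t).
  { apply cp_of_cont, (Hc t). }
  assert (hDY : continuity_pt (Derive (fun s => Im (g s))) t).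
  { apply cp_of_cont, (Hc t). }
  apply (continuity_pt_mult (fun t => rho_S (g t))
     (fun t => sqrt ((Derive (fun s => Re (g s)) t) ^ 2 +
                       (Derive (fun s => Im (g s)) t) ^ 2))).
  - unfold rho_S, Rdiv.
    apply (continuity_pt_mult (fun _ => PI * / 2) (fun t => / cos (PI * / 2 * Re (g t)))).
    + apply continuity_pt_const. intros a b; reflexivity.
    + apply (continuity_pt_inv (fun t => cos (PI * / 2 * Re (g t)))).
      * apply (continuity_pt_comp (fun t => PI * / 2 * Re (g t)) cos).
        -- apply (continuity_pt_mult (fun _ => PI * / 2) (fun t => Re (g t))); auto.
           apply continuity_pt_const. intros a b; reflexivity.
        -- apply continuity_cos.
      * pose proof (cos_strip _ Hs). unfold Rdiv in H. lra.
  - apply (continuity_pt_comp (fun t => (Derive (fun s => Re (g s)) t) ^ 2 +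
                       (Derive (fun s => Im (g s)) t) ^ 2) sqrt).
    + apply (continuity_pt_plus (fun t => (Derive (fun s => Re (g s)) t) ^ 2)
                       (fun t => (Derive (fun s => Im (g s)) t) ^ 2)).
      * apply (continuity_pt_comp (Derive (fun s => Re (g s))) (fun x => x ^ 2)); auto.
        apply derivable_continuous_pt. apply derivable_pt_pow.
      * apply (continuity_pt_comp (Derive (fun s => Im (g s))) (fun x => x ^ 2)); auto.
        apply derivable_continuous_pt. apply derivable_pt_pow.
    + apply continuity_pt_sqrt. nra.
Qed.

Lemma hlength_lb g z : curve_in_S g z 0 -> z <> 0 -> PI / 2 * Cmod z <= hlength g.
Proof.
  intros [HC [H0 [H1 Hin]]] Hz.
  set c := Cmod z.
  assert (Hc : 0 < c) by (apply Cmod_gt_0; exact Hz).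
  set a := Re z / c. set b := Im z / c.
  assert (Hab : a * Re z + b * Im z = c).
  { unfold a, b. assert (c * c = Re z ^ 2 + Im z ^ 2).
    { unfold c, Cmod. rewrite -/(Rsqr _) Rsqr_sqrt //. unfold Re, Im; nra. }
    replace (Re z / c * Re z + Im z / c * Im z) with ((Re z ^ 2 + Im z ^ 2) / c) by (field; lra).
    rewrite -H. field. lra. }
  assert (Hab2 : a ^ 2 + b ^ 2 = 1).
  { unfold a, b. assert (c * c = Re z ^ 2 + Im z ^ 2).
    { unfold c, Cmod. rewrite -/(Rsqr _) Rsqr_sqrt //. unfold Re, Im; nra. }
    replace ((Re z / c) ^ 2 + (Im z / c) ^ 2) with ((Re z ^ 2 + Im z ^ 2) / (c * c)) by (field; lra).
    rewrite -H. field. lra. }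
  destruct HC as [Hd Hcd].
  set X := fun s => Re (g s). set Y := fun s => Im (g s).
  set F := fun t => PI / 2 * (- (a * X t + b * Y t)).
  set h := fun t => PI / 2 * (- (a * Derive X t + b * Derive Y t)).
  assert (HI : is_RInt h 0 1 (minus (F 1) (F 0))).
  { apply: is_RInt_derive.
    - intros x _. unfold F, h.
      apply: is_derive_scal. apply: is_derive_opp. apply: is_derive_plus.
      + apply: is_derive_scal. apply Derive_correct. apply (proj1 (Hd x)).
      + apply: is_derive_scal. apply Derive_correct. apply (proj2 (Hd x)).
    - intros x _. unfold h.
      apply cont_of_cp.
      pose proof (cp_of_cont _ _ (proj1 (Hcd x))) as h1.
      pose proof (cp_of_cont _ _ (proj2 (Hcd x))) as h2.
      apply (continuity_pt_mult (fun _ => PI/2) (fun t => - (a * Derive X t + b * Derive Y t))).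
      + apply continuity_pt_const. intros u v; reflexivity.
      + apply (continuity_pt_opp (fun t => (a * Derive X t + b * Derive Y t))).
        apply (continuity_pt_plus (fun t => a * Derive X t) (fun t => b * Derive Y t)).
        * apply (continuity_pt_mult (fun _ => a) (Derive X)); auto.
          apply continuity_pt_const. intros u v; reflexivity.
        * apply (continuity_pt_mult (fun _ => b) (Derive Y)); auto.
          apply continuity_pt_const. intros u v; reflexivity. }
  assert (HF : minus (F 1) (F 0) = PI / 2 * c).
  { unfold minus, plus, opp; simpl. unfold F, X, Y. rewrite H1 H0. simpl.
    rewrite -Hab. unfold Re, Im. ring. }
  rewrite HF in HI.
  rewrite -(is_RInt_unique _ _ _ _ HI).
  unfold hlength. apply RInt_le.
  - lra.
  - exists (PI / 2 * c). exact HI.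
  - apply: ex_RInt_continuous. intros t Ht.
    assert (E1 : Rmin 0 1 = 0) by (apply Rmin_left; lra).
    assert (E2 : Rmax 0 1 = 1) by (apply Rmax_right; lra).
    rewrite E1 E2 in Ht.
    apply integrand_cont. split; assumption. apply Hin; lra.
  - intros t Ht. unfold h.
    fold X Y.
    set u := Derive X t. set v := Derive Y t.
    assert (Hs : Rabs (a * u + b * v) <= sqrt (u ^ 2 + v ^ 2)).
    { apply Rsqr_incr_0_var.
      - assert (Hn : 0 <= u ^ 2 + v ^ 2) by nra.
        rewrite Rsqr_sqrt //. rewrite -Rsqr_abs. unfold Rsqr.
        assert (0 <= (a * v - b * u) ^ 2) by apply pow2_ge_0.
        assert (Eq : (a * u + b * v) * (a * u + b * v) + (a * v - b * u) ^ 2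
                 = (a ^ 2 + b ^ 2) * (u ^ 2 + v ^ 2)) by ring.
        rewrite Hab2 in Eq. lra.
      - apply sqrt_pos. }
    assert (Hs2 : - (a * u + b * v) <= sqrt (u ^ 2 + v ^ 2)).
    { pose proof (Rabs_maj2 (a * u + b * v)). lra. }
    pose proof (cos_strip (Re (g t)) (Hin t ltac:(lra))) as [Hc1 Hc2].
    unfold rho_S.
    assert (PI / 2 <= PI / 2 / cos (PI / 2 * Re (g t))).
    { unfold Rdiv. rewrite -{1}(Rmult_1_r (PI * /2)). apply Rmult_le_compat_l.
      pose proof PI_RGT_0; lra.
      rewrite -Rinv_1. apply Rinv_le_contravar; lra. }
    pose proof (sqrt_pos (u ^ 2 + v ^ 2)).
    pose proof PI_RGT_0.
    apply Rle_trans with (PI / 2 * sqrt (u ^ 2 + v ^ 2)).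
    + apply Rmult_le_compat_l; lra.
    + apply Rmult_le_compat_r; lra.
Qed.

Theorem lemma2 (lam : R) (hlam : 0 < lam) :
  (exists z : C, closed_disc_S lam z /\ Cmod z = 2 / PI * lam) /\
  (forall z : C, closed_disc_S lam z -> Cmod z <= 2 / PI * lam).
Proof.
  pose proof PI_RGT_0 as HPI.
  split.
  - set k := 2 / PI * lam.
    assert (Hk : 0 < k) by (unfold k; apply Rmult_lt_0_compat; [apply Rdiv_lt_0_compat|]; lra).
    exists (0, k). split; [split|].
    + unfold in_strip, Re; simpl; lra.
    + set g := fun t : R => ((0, (1 - t) * k) : C).
      assert (DX : Derive (fun s => Re (g s)) = fun _ => 0).
      { apply functional_extensionality => t. unfold g, Re; simpl. apply Derive_const. }
      assert (DYt : forall t, is_derive (fun s => Im (g s)) t (- k)).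
      { intro t. unfold g, Im; simpl. auto_derive; auto. ring. }
      assert (DY : Derive (fun s => Im (g s)) = fun _ => - k).
      { apply functional_extensionality => t. apply is_derive_unique, DYt. }
      assert (Hg : curve_in_S g (0, k) 0).
      { split; [split|split; [|split]].
        - intro t. split.
          + unfold g, Re; simpl. apply: ex_derive_const.
          + eexists. apply DYt.
        - intro t. rewrite DX DY. split; apply: continuous_const.
        - unfold g. f_equal. ring.
        - unfold g. apply injective_projections; simpl; ring.
        - intros t _. unfold in_strip, g, Re; simpl; lra. }
      assert (HL : hlength g = lam).
      { unfold hlength. rewrite DX DY.
        rewrite (RInt_ext _ (fun _ => PI / 2 * k)).
        - rewrite RInt_const. unfold scal; simpl. unfold mult; simpl.
          unfold k. field. lra.
        - intros x _. unfold rho_S, g, Re; simpl. rewrite Rmult_0_r cos_0.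
          replace (0 * (0 * 1) + - k * (- k * 1)) with (k * k) by ring.
          rewrite sqrt_square; [lra|]. lra. }
      pose proof (Glb_Rbar_correct (fun L => exists g, curve_in_S g (0, k) 0 /\ L = hlength g)) as [Hlb _].
      unfold d_S. rewrite -HL. apply Hlb. exists g. split; auto.
    + unfold Cmod; simpl. replace (0 * (0 * 1) + k * (k * 1)) with (k * k) by ring.
      apply sqrt_square; lra.
  - intros z [Hs Hd].
    destruct (Ceq_dec z 0) as [E|E].
    + rewrite E Cmod_0. apply Rmult_le_pos; [apply Rlt_le, Rdiv_lt_0_compat|]; lra.
    + pose proof (Glb_Rbar_correct (fun L => exists g, curve_in_S g z 0 /\ L = hlength g)) as [_ Hgl].
      assert (H : Rbar_le (PI / 2 * Cmod z) (d_S z 0)).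
      { apply Hgl. intros x [g [Hg ->]]. simpl. apply hlength_lb; auto. }
      pose proof (Rbar_le_trans _ _ _ H Hd) as H2. simpl in H2.
      apply (Rmult_le_reg_l (PI / 2)). apply Rdiv_lt_0_compat; lra.
      replace (PI / 2 * (2 / PI * lam)) with lam by (field; lra). exact H2.
Qed.
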